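(* Let $\mathfrak{A}$ be an atomic weakly associative relation algebra and let $\mathfrak{B}=\langle B,T_\kappa,E_{\kappa\lambda}\rangle_{\kappa,\lambda<3}$ be its suitable structure. Then $\mathfrak{Cm}\,\mathfrak{B}\in\mathsf{NA}_3$, i.e., $\mathfrak{Cm}\,\mathfrak{B}$ is a non-commutative 3-dimensional cylindric algebra.
   Context: WA: algebras $\langle A,+,\overline{\phantom{x}},;,\breve{\phantom{x}},1'\rangle$ with $x\cdot y=\overline{\overline{x}+\overline{y}}$, $0'=\overline{1'}$, $1=1'+0'$, $0=\overline{1}$, satisfying for all $x,y,z$: $x+y=y+x$; $x+(y+z)=(x+y)+z$; $\overline{\overline{x}+\overline{y}}+\overline{\overline{x}+y}=x$; $((x\cdot 1');1);1=(x\cdot1');1$; $(x+y);z=x;z+y;z$; $x;1'=x$; $\breve{\breve{x}}=x$; $\breve{(x+y)}=\breve{x}+\breve{y}$; $\breve{(x;y)}=\breve{y};\breve{x}$; $\breve{x};\overline{x;y}+\overline{y}=\overline{y}$. Suitable structure of $\mathfrak{A}$: $B=\{s\in{}^3\mathrm{At}(\mathfrak{A}): s_2;s_0\ge s_1\}$; $T_\kappa=\{\langle s,t\rangle\in B\times B:s_\kappa=t_\kappa\}$; $E_{\kappa\kappa}=B$; for distinct $\kappa,\lambda$ with third index $\mu$, $E_{\kappa\lambda}=\{s\in B:s_\mu\le1'\}$. Complex algebra $\mathfrak{Cm}\,\mathfrak{B}=\langle\mathcal{P}(B),\cup,\cap,B\setminus\cdot,\emptyset,B,T_\kappa^*,E_{\kappa\lambda}\rangle_{\kappa,\lambda<3}$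 with cylindrifications $c_\kappa=T_\kappa^*$, $T_\kappa^*(X)=\{y\in B:\exists x\in X\ \langle y,x\rangle\in T_\kappa\}$, and diagonals $d_{\kappa\lambda}=E_{\kappa\lambda}$. $\mathsf{NA}_3$ is the class of algebras $\langle C,+,\cdot,-,0,1,c_\kappa,d_{\kappa\lambda}\rangle_{\kappa,\lambda<3}$ such that: (C0) the Boolean reduct is a Boolean algebra; (C1) $c_\kappa0=0$; (C2) $x\le c_\kappa x$; (C3) $c_\kappa(x\cdot c_\kappa y)=c_\kappa x\cdot c_\kappa y$; (C4$^*$) $c_\kappa c_\lambda x\ge c_\lambda c_\kappa x\cdot d_{\lambda\mu}$ whenever $\mu\ne\kappa,\lambda$; (C5) $d_{\kappa\kappa}=1$; (C6) $d_{\kappa\mu}=c_\lambda(d_{\kappa\lambda}\cdot d_{\lambda\mu})$ whenever $\lambda\ne\kappa,\mu$; (C7) $c_\kappa(d_{\kappa\lambda}\cdot x)\cdot c_\kappa(d_{\kappa\lambda}\cdot -x)=0$ whenever $\kappa\ne\lambda$. *)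

(* Defs.v *)
Set Implicit Arguments.

Record RAsig := {
  ra_car :> Type;
  ra_plus : ra_car -> ra_car -> ra_car;
  ra_compl : ra_car -> ra_car;
  ra_comp : ra_car -> ra_car -> ra_car;
  ra_conv : ra_car -> ra_car;
  ra_id : ra_car
}.

Section WAdefs.
Variable A : RAsig.
Local Notation "x + y" := (ra_plus A x y).
Local Notation "- x" := (ra_compl A x).
Local Notation "x ; y" := (ra_comp A x y) (at level 40, left associativity).
Local Notation "x ^~" := (ra_conv A x) (at level 2).
Local Notation "1'" := (ra_id A).

Definition ra_meet (x y : A) : A := - (- x + - y).
Definition ra_diversity : A := - 1'.
Definition ra_top : A := 1' + ra_diversity.
Definition ra_bot : A := - ra_top.
Definition ra_le (x y : A) : Prop := x + y = y.

Definition is_WA : Prop :=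
  (forall x y : A, x + y = y + x) /\
  (forall x y z : A, x + (y + z) = (x + y) + z) /\
  (forall x y : A, - (- x + - y) + - (- x + y) = x) /\
  (forall x : A, ((ra_meet x 1') ; ra_top) ; ra_top = (ra_meet x 1') ; ra_top) /\
  (forall x y z : A, (x + y) ; z = x ; z + y ; z) /\
  (forall x : A, x ; 1' = x) /\
  (forall x : A, x^~^~ = x) /\
  (forall x y : A, (x + y)^~ = x^~ + y^~) /\
  (forall x y : A, (x ; y)^~ = y^~ ; x^~) /\
  (forall x y : A, x^~ ; (- (x ; y)) + - y = - y).

Definition is_atom (a : A) : Prop :=
  a <> ra_bot /\ forall x : A, ra_le x a -> x = ra_bot \/ x = a.

Definition is_atomic : Prop :=
  forall x : A, x <> ra_bot -> exists a, is_atom a /\ ra_le a x.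
End WAdefs.

Inductive idx3 : Type := i0 | i1 | i2.

Definition third (k l : idx3) : idx3 :=
  match k, l with
  | i0, i1 | i1, i0 => i2
  | i0, i2 | i2, i0 => i1
  | i1, i2 | i2, i1 => i0
  | i0, i0 => i0 | i1, i1 => i1 | i2, i2 => i2  (* unused *)
  end.

Section Suitable.
Variable A : RAsig.

Definition inB (s : idx3 -> A) : Prop :=
  (forall i, is_atom A (s i)) /\ ra_le A (s i1) (ra_comp A (s i2) (s i0)).

Definition Bpt : Type := { s : idx3 -> A | inB s }.

Definition Tk (k : idx3) (s t : Bpt) : Prop := proj1_sig s k = proj1_sig t k.

Definition Ekl (k l : idx3) (s : Bpt) : Prop :=
  if (match k, l with i0,i0 | i1,i1 | i2,i2 => true | _,_ => false end)
  then True
  else ra_le A (proj1_sig s (third k l)) (ra_id A).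

Definition CmSet : Type := Bpt -> Prop.
Definition cm_join (X Y : CmSet) : CmSet := fun s => X s \/ Y s.
Definition cm_meet (X Y : CmSet) : CmSet := fun s => X s /\ Y s.
Definition cm_compl (X : CmSet) : CmSet := fun s => ~ X s.
Definition cm_zero : CmSet := fun _ => False.
Definition cm_one : CmSet := fun _ => True.
Definition cm_cyl (k : idx3) (X : CmSet) : CmSet :=
  fun y => exists x, X x /\ Tk k y x.
Definition cm_diag (k l : idx3) : CmSet := Ekl k l.
End Suitable.

Definition is_boolean_algebra (C : Type) (plus mul : C -> C -> C)
    (minus : C -> C) (zero one : C) : Prop :=
  (forall x y, plus x y = plus y x) /\
  (forall x y, mul x y = mul y x) /\
  (forall x y z, plus x (plus y z) = plus (plus x y) z) /\
  (forall x y z, mul x (mul y z) = mul (mul x y) z) /\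
  (forall x y, plus x (mul x y) = x) /\
  (forall x y, mul x (plus x y) = x) /\
  (forall x y z, mul x (plus y z) = plus (mul x y) (mul x z)) /\
  (forall x y z, plus x (mul y z) = mul (plus x y) (plus x z)) /\
  (forall x, plus x (minus x) = one) /\
  (forall x, mul x (minus x) = zero).

Definition is_NA3 (C : Type) (plus mul : C -> C -> C) (minus : C -> C)
    (zero one : C) (c : idx3 -> C -> C) (d : idx3 -> idx3 -> C) : Prop :=
  let le x y := plus x y = y in
  is_boolean_algebra plus mul minus zero one /\
  (forall k, c k zero = zero) /\
  (forall k x, le x (c k x)) /\
  (forall k x y, c k (mul x (c k y)) = mul (c k x) (c k y)) /\
  (forall k l m x, m <> k -> m <> l ->
               le (mul (c l (c k x)) (d l m)) (c k (c l x))) /\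
  (forall k, d k k = one) /\
  (forall k l m, l <> k -> l <> m ->
               d k m = c l (mul (d k l) (d l m))) /\
  (forall k l x, k <> l ->
               mul (c k (mul (d k l) x)) (c k (mul (d k l) (minus x))) = zero).

(* Main.v *)
Require Import Defs.
From Stdlib Require Import Setoid Classical FunctionalExtensionality PropExtensionality ProofIrrelevance.
Section Hunt.
Variable T : Type.
Variable P : T -> T -> T.
Variable N : T -> T.
Hypothesis C : forall x y, P x y = P y x.
Hypothesis A : forall x y z, P x (P y z) = P (P x y) z.
Hypothesis H : forall x y, P (N (P (N x) (N y))) (N (P (N x) y)) = x.

Lemma L1 x : P x (N x) = P (N x) (N (N x)).
Proof.
  pose proof (C x (N x)).
  pose proof (C (N x) (N (N x))).
  pose proof (H x (N (N x))).
  pose proof (H (N x) (N x)).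
  pose proof (H (N x) (N (N x))).
  pose proof (H (N (N x)) (N x)).
  pose proof (A (N (P (N (N x)) (N (N (N x))))) (N (P (N (N x)) (N (N x)))) (N (N x))).
  pose proof (A (N (P (N (N x)) (N (N (N x))))) (N (P (N (N x)) (N (N x)))) x).
  pose proof (C (N x) (N (N (N x)))).
  pose proof (C (N (P (N x) (N (N (N x))))) (N (P (N x) (N (N x))))).
  pose proof (C (N (N x)) (N (N (N x)))).
  pose proof (C (N (P (N (N x)) (N (N (N x))))) (N (P (N (N x)) (N (N x))))).
  pose proof (A (N (P (N (N x)) (N (N x)))) (N (P (N x) (N (N x)))) (N (P (N x) (N (N (N x)))))).
  pose proof (A (N (P (N (N x)) (N (N x)))) (N (P (N (N x)) (N (N (N x))))) (N (P (N x) (N (N (N x)))))).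
  congruence.
Qed.

Lemma NN x : N (N x) = x.
Proof.
  pose proof (C (N (N x)) (N (N (N (N x))))).
  pose proof (C (N (N (N (N x)))) (N (N (N x)))).
  pose proof (C (N (P (N (N (N (N x)))) (N (N (N x))))) (N (P (N (N (N (N x)))) (N (N x))))).
  pose proof (H x (N (N (N x)))).
  pose proof (H (N x) (N (N (N x)))).
  pose proof (H (N (N x)) (N x)).
  pose proof (H (N (N (N x))) (N (N x))).
  pose proof (L1 (N (N x))).
  congruence.
Qed.

Lemma U x y : P x (N x) = P y (N y).
Proof.
  pose proof (C x (N x)).
  pose proof (H x y).
  pose proof (H y x).
  pose proof (H (N x) (N y)).
  pose proof (H (N y) (N x)).
  pose proof (NN x).
  pose proof (NN y).
  pose proof (A y (N (P (N (N y)) x)) (N (P (N (N y)) (N x)))).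
  pose proof (A (N x) (N (P (N x) (N y))) (N (P (N x) y))).
  pose proof (C (N x) (N y)).
  pose proof (C (N x) y).
  pose proof (C (N y) x).
  pose proof (C x y).
  pose proof (C (N (P (N (N x)) (N y))) (N (P (N (N x)) y))).
  pose proof (C (N (P (N x) (N y))) (N x)).
  pose proof (A (N (P (N x) (N y))) (N (P (N y) x)) (N (P (N (N x)) y))).
  congruence.
Qed.

Lemma Z0 x : P (N (P x (N x))) (N (P x (N x))) = N (P x (N x)).
Proof.
  pose proof (A (N (P (N (P (P x (N x)) (P x (N x)))) (P x (N x)))) (P x (N x)) (N (P x (N x)))).
  pose proof (A (P (P x (N x)) (P x (N x))) (N (P x (N x))) (N (P (P x (N x)) (P x (N x))))).
  pose proof (H (N (P x (N x))) (P x (N x))).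
  pose proof (H (N (P x (N x))) (N (P x (N x)))).
  pose proof (H (P (P x (N x)) (P x (N x))) (N (P x (N x)))).
  pose proof (NN (P x (N x))).
  pose proof (U (P x (N x)) x).
  pose proof (U (P (P x (N x)) (P x (N x))) x).
  congruence.
Qed.

Lemma B0 x y : P x (N (P y (N y))) = x.
Proof.
  rewrite (U y x).
  pose proof (C x (N x)).
  pose proof (C x (N (P x (N x)))).
  pose proof (H x (N x)).
  pose proof (NN x).
  pose proof (Z0 x).
  pose proof (A (N (P x (N x))) (N (P x (N x))) (N (P (N x) (N x)))).
  congruence.
Qed.

Lemma Idem x : P x x = x.
Proof.
  assert (E : forall z, N (P (N z) (N z)) = z).
  { intro z. pose proof (H z z). rewrite (C (N z) z), B0 in H0. exact H0. }
  pose proof (E (N x)). rewrite !NN in H0. rewrite <- (NN (P x x)), H0, NN. reflexivity.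
Qed.
End Hunt.


Ltac nd := match goal with H : ?a <> ?a |- _ => exfalso; exact (H eq_refl) end.
Section WA.
Variable A : RAsig.
Local Notation "x + y" := (ra_plus A x y).
Local Notation "- x" := (ra_compl A x).
Local Notation "x ; y" := (ra_comp A x y) (at level 40, left associativity).
Local Notation "x ^~" := (ra_conv A x) (at level 2).
Local Notation "1'" := (ra_id A).
Local Notation le := (ra_le A).
Local Notation meet := (ra_meet A).
Local Notation bot := (ra_bot A).
Local Notation top := (ra_top A).

Hypothesis Hcomm : forall x y : A, x + y = y + x.
Hypothesis Hassoc : forall x y z : A, x + (y + z) = (x + y) + z.
Hypothesis Hhunt : forall x y : A, - (- x + - y) + - (- x + y) = x.
Hypothesis Hwa : forall x : A, ((meet x 1') ; top) ; top = (meet x 1') ; top.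
Hypothesis Hdist : forall x y z : A, (x + y) ; z = x ; z + y ; z.
Hypothesis Hidr : forall x : A, x ; 1' = x.
Hypothesis Hcc : forall x : A, x^~^~ = x.
Hypothesis Hcplus : forall x y : A, (x + y)^~ = x^~ + y^~.
Hypothesis Hccomp : forall x y : A, (x ; y)^~ = y^~ ; x^~.
Hypothesis Htarski : forall x y : A, x^~ ; (- (x ; y)) + - y = - y.

Lemma nn (x : A) : - - x = x.
Proof. exact (NN _ _ _ Hcomm Hassoc Hhunt x). Qed.
Lemma top_eq (x : A) : top = x + - x.
Proof. exact (U _ _ _ Hcomm Hassoc Hhunt 1' x). Qed.
Lemma plus_bot (x : A) : x + bot = x.
Proof. exact (B0 _ _ _ Hcomm Hassoc Hhunt x 1'). Qed.
Lemma idem (x : A) : x + x = x.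
Proof. exact (Idem _ _ _ Hcomm Hassoc Hhunt x). Qed.
Lemma plus_top (x : A) : x + top = top.
Proof. rewrite (top_eq x), Hassoc, idem. reflexivity. Qed.

Lemma le_refl x : le x x.
Proof. apply idem. Qed.
Lemma le_trans x y z : le x y -> le y z -> le x z.
Proof. unfold ra_le. intros H1 H2. rewrite <- H2, Hassoc, H1. reflexivity. Qed.
Lemma le_antisym x y : le x y -> le y x -> x = y.
Proof. unfold ra_le. intros H1 H2. rewrite <- H1, Hcomm, H2. reflexivity. Qed.
Lemma le_top x : le x top.
Proof. apply plus_top. Qed.
Lemma bot_le x : le bot x.
Proof. unfold ra_le. rewrite Hcomm. apply plus_bot. Qed.
Lemma le_plus_l x y : le x (x + y).
Proof. unfold ra_le. rewrite Hassoc, idem. reflexivity. Qed.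
Lemma le_plus_r x y : le y (x + y).
Proof. rewrite Hcomm. apply le_plus_l. Qed.
Lemma le_plus_glb x y z : le x z -> le y z -> le (x + y) z.
Proof. unfold ra_le. intros H1 H2. rewrite <- Hassoc, H2, H1. reflexivity. Qed.
Lemma le_bot x : le x bot -> x = bot.
Proof. intro H. apply le_antisym; auto using bot_le. Qed.

Lemma meet_le_l x y : le (meet x y) x.
Proof.
  unfold ra_le, ra_meet.
  rewrite <- (Hhunt x y) at 2. rewrite Hassoc, idem. apply Hhunt.
Qed.
Lemma meet_comm x y : meet x y = meet y x.
Proof. unfold ra_meet. rewrite Hcomm. reflexivity. Qed.
Lemma meet_le_r x y : le (meet x y) y.
Proof. rewrite meet_comm. apply meet_le_l. Qed.
Lemma meet_assoc x y z : meet x (meet y z) = meet (meet x y) z.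
Proof. unfold ra_meet. rewrite !nn, Hassoc. reflexivity. Qed.
Lemma meet_abs x y : meet x (x + y) = x.
Proof.
  unfold ra_meet.
  assert (E : - x + - (x + y) = - x).
  { pose proof (meet_le_l (- x) (- y)) as H. unfold ra_le, ra_meet in H.
    rewrite !nn in H. rewrite Hcomm. exact H. }
  rewrite E, nn. reflexivity.
Qed.
Lemma le_meet_iff x y : le x y <-> meet x y = x.
Proof.
  split.
  - intro H. unfold ra_le in H. rewrite <- H. apply meet_abs.
  - intro H. unfold ra_le. rewrite <- H at 1. apply meet_le_r.
Qed.
Lemma le_meet a u v : le a u -> le a v -> le a (meet u v).
Proof.
  intros H1 H2. apply le_meet_iff. apply le_meet_iff in H1. apply le_meet_iff in H2.
  rewrite meet_assoc, H1, H2. reflexivity.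
Qed.
Lemma compl_anti a b : le a b -> le (- b) (- a).
Proof.
  intro H. apply le_meet_iff in H. unfold ra_le.
  rewrite <- H at 2. unfold ra_meet. rewrite nn, Hcomm. reflexivity.
Qed.
Lemma meet_compl x : meet x (- x) = bot.
Proof. unfold ra_meet, ra_bot. rewrite nn, Hcomm, <- top_eq. reflexivity. Qed.
Lemma disj_le_compl a x : meet a x = bot -> le a (- x).
Proof.
  intro H. pose proof (Hhunt a x) as E. unfold ra_meet in H. rewrite H in E.
  rewrite Hcomm, plus_bot in E. rewrite <- E. rewrite <- (nn x) at 1.
  apply meet_le_r.
Qed.
Lemma le_compl_bot x : le x (- x) -> x = bot.
Proof.
  intro H. apply le_bot. rewrite <- (meet_compl x). apply le_meet; auto using le_refl.
Qed.

Lemma atom_nb a : is_atom A a -> a <> bot.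
Proof. intros [H _]. exact H. Qed.
Lemma atom_meet a x : is_atom A a -> meet a x = bot \/ le a x.
Proof.
  intros [Hnb Ha]. destruct (Ha (meet a x) (meet_le_l a x)) as [E|E]; auto.
  right. rewrite <- E. apply meet_le_r.
Qed.
Lemma atom_le_or_compl a x : is_atom A a -> le a x \/ le a (- x).
Proof.
  intro Ha. destruct (atom_meet _ x Ha) as [E|E]; auto. right. apply disj_le_compl; auto.
Qed.
Lemma atom_le_eq a b : is_atom A a -> is_atom A b -> le a b -> a = b.
Proof.
  intros Ha [Hnb Hb] H. destruct (Hb a H) as [E|E]; auto. destruct Ha. contradiction.
Qed.
Lemma atom_under a x : is_atom A a -> le a x -> le a (- x) -> False.
Proof.
  intros Ha H1 H2. apply (atom_nb _ Ha).
  apply le_bot. rewrite <- (meet_compl x). apply le_meet; auto.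
Qed.
Lemma atom_meet_nb a b : is_atom A a -> is_atom A b -> meet a b <> bot -> a = b.
Proof.
  intros Ha Hb H. destruct (atom_meet _ b Ha) as [E|E]; [contradiction|].
  apply atom_le_eq; auto.
Qed.
Lemma atom_plus a x y : is_atom A a -> le a (x + y) -> le a x \/ le a y.
Proof.
  intros Ha H. destruct (atom_le_or_compl _ x Ha) as [?|H1]; auto.
  destruct (atom_le_or_compl _ y Ha) as [?|H2]; auto. exfalso.
  apply (atom_under _ _ Ha H). assert (E : - (x + y) = meet (- x) (- y)).
  { unfold ra_meet. rewrite !nn. reflexivity. }
  rewrite E. apply le_meet; auto.
Qed.
Hypothesis Hatomic : is_atomic A.

Lemma conv_mono x y : le x y -> le (x^~) (y^~).
Proof. unfold ra_le. intro H. rewrite <- Hcplus, H. reflexivity. Qed.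
Lemma conv_le_l x y : le (x^~) y -> le x (y^~).
Proof. intro H. rewrite <- (Hcc x). apply conv_mono; auto. Qed.
Lemma conv_le_r x y : le x (y^~) -> le (x^~) y.
Proof. intro H. rewrite <- (Hcc y). apply conv_mono; auto. Qed.
Lemma comp_mono_l x y z : le x y -> le (x;z) (y;z).
Proof. unfold ra_le. intro H. rewrite <- Hdist, H. reflexivity. Qed.
Lemma comp_distr_r x y z : z;(x+y) = z;x + z;y.
Proof.
  rewrite <- (Hcc (z;(x+y))), Hccomp, Hcplus, Hdist, Hcplus, !Hccomp, !Hcc. reflexivity.
Qed.
Lemma comp_mono_r x y z : le x y -> le (z;x) (z;y).
Proof. unfold ra_le. intro H. rewrite <- comp_distr_r, H. reflexivity. Qed.
Lemma comp_mono x y u v : le x y -> le u v -> le (x;u) (y;v).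
Proof. intros. apply le_trans with (y;u). apply comp_mono_l; auto. apply comp_mono_r; auto. Qed.
Lemma conv_id : 1'^~ = 1'.
Proof.
  symmetry. transitivity ((1'^~ ; 1')^~). rewrite Hidr, Hcc. reflexivity.
  rewrite Hccomp, Hcc, Hidr. reflexivity.
Qed.
Lemma id_l x : 1';x = x.
Proof. rewrite <- (Hcc (1';x)), Hccomp, conv_id, Hidr, Hcc. reflexivity. Qed.
Lemma conv_bot : bot^~ = bot.
Proof.
  apply le_bot. apply conv_le_r. apply bot_le.
Qed.
Lemma nb_mono x y : le x y -> x <> bot -> y <> bot.
Proof. intros H Hx E. subst. apply Hx. apply le_bot; auto. Qed.
Lemma atom_conv a : is_atom A a -> is_atom A (a^~).
Proof.
  intros [Hnb Ha]. split.
  - intro E. apply Hnb. rewrite <- (Hcc a), E. apply conv_bot.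
  - intros x Hx. apply conv_le_r in Hx. destruct (Ha _ Hx) as [E|E].
    + left. rewrite <- (Hcc x), E. apply conv_bot.
    + right. rewrite <- (Hcc x), E. reflexivity.
Qed.
Lemma tarski_le x y : le (x^~ ; (- (x;y))) (- y).
Proof. apply Htarski. Qed.
Lemma gcyc c x y : is_atom A c -> le c (x;y) -> meet y (x^~ ; c) <> bot.
Proof.
  intros Hc H E. apply disj_le_compl in E.
  apply (atom_under _ c Hc (le_refl c)).
  apply le_trans with (x;y); auto.
  apply le_trans with (x ; (- (x^~ ; c))). apply comp_mono_r; auto.
  pose proof (tarski_le (x^~) c) as T. rewrite Hcc in T. exact T.
Qed.
Lemma cyc1 a b c : is_atom A b -> is_atom A c -> le c (a;b) -> le b (a^~ ; c).
Proof.
  intros Hb Hc H. destruct (atom_meet _ (a^~;c) Hb) as [E|E]; auto.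
  exfalso. exact (gcyc _ _ _ Hc H E).
Qed.
Lemma cyc2 a b c : is_atom A a -> is_atom A c -> le c (a;b) -> le a (c ; b^~).
Proof.
  intros Ha Hc H. apply conv_mono in H. rewrite Hccomp in H.
  apply cyc1 in H; try apply atom_conv; auto. rewrite Hcc in H.
  apply conv_mono in H. rewrite Hcc, Hccomp, Hcc in H. exact H.
Qed.

Definition idat (e : A) := is_atom A e /\ le e 1'.
Lemma sub_r x e : le e 1' -> le (x;e) x.
Proof. intro H. rewrite <- (Hidr x) at 2. apply comp_mono_r; auto. Qed.
Lemma sub_l x e : le e 1' -> le (e;x) x.
Proof. intro H. rewrite <- (id_l x) at 2. apply comp_mono_l; auto. Qed.
Lemma idat_conv e : idat e -> e^~ = e.
Proof.
  intros [Ha He].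
  assert (He' : le (e^~) 1') by (rewrite <- conv_id; apply conv_mono; auto).
  pose proof (gcyc e e 1' Ha) as G. rewrite Hidr in G. specialize (G (le_refl e)).
  symmetry. apply atom_meet_nb; auto using atom_conv.
  intro E. apply G. apply le_bot. rewrite <- E.
  apply le_trans with (e^~ ; e). apply meet_le_r.
  apply le_meet. apply sub_l; auto. apply sub_r; auto.
Qed.
Lemma idat_conv_idat e : idat e -> idat (e^~).
Proof. intro H. rewrite idat_conv; auto. Qed.

Definition isdom e a := idat e /\ le a (e;a).
Definition isran e a := idat e /\ le a (a;e).

Lemma ran_exists a : is_atom A a -> exists e, isran e a.
Proof.
  intro Ha. pose proof (gcyc a a 1' Ha) as G. rewrite Hidr in G. specialize (G (le_refl a)).
  destruct (Hatomic _ G) as [e [He Hle]].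
  assert (He1 : le e 1') by (apply le_trans with (meet 1' (a^~;a)); auto using meet_le_l).
  assert (He2 : le e (a^~;a)) by (apply le_trans with (meet 1' (a^~;a)); auto using meet_le_r).
  exists e. split. split; auto.
  apply cyc2 in He2; auto using atom_conv. apply conv_le_l in He2.
  rewrite Hccomp, Hcc, idat_conv in He2; auto. split; auto.
Qed.
Lemma isran_conv e a : isran e a -> isdom e (a^~).
Proof.
  intros [He H]. split; auto. apply conv_mono in H. rewrite Hccomp, (idat_conv e He) in H; auto.
Qed.
Lemma isdom_conv e a : isdom e a -> isran e (a^~).
Proof.
  intros [He H]. split; auto. apply conv_mono in H. rewrite Hccomp, (idat_conv e He) in H; auto.
Qed.
Lemma isran_conv' e a : isdom e (a^~) -> isran e a.
Proof. intro H. apply isdom_conv in H. rewrite Hcc in H. exact H. Qed.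
Lemma isdom_conv' e a : isran e (a^~) -> isdom e a.
Proof. intro H. apply isran_conv in H. rewrite Hcc in H. exact H. Qed.
Lemma dom_exists a : is_atom A a -> exists e, isdom e a.
Proof.
  intro Ha. destruct (ran_exists _ (atom_conv _ Ha)) as [e He]. exists e.
  apply isdom_conv'; auto.
Qed.
Lemma dom_top e f : idat e -> idat f -> le f (e;top) -> e = f.
Proof.
  intros He Hf H. pose proof (gcyc f e top (proj1 Hf) H) as G.
  rewrite idat_conv in G; auto.
  apply atom_meet_nb; try apply He; try apply Hf.
  intro E. apply G. apply le_bot. rewrite <- E.
  apply le_trans with (e;f). apply meet_le_r.
  apply le_meet. apply sub_r, Hf. apply sub_l, He.
Qed.
Lemma wa_e e : idat e -> (e;top);top = e;top.
Proof.
  intro He. pose proof (Hwa e) as W. assert (E : meet e 1' = e).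
  { apply le_meet_iff. apply He. }
  rewrite E in W. exact W.
Qed.
Lemma dom_of_le_top c e f : is_atom A c -> idat e -> le c (e;top) -> isdom f c -> f = e.
Proof.
  intros Hc He H [Hf Hfc]. symmetry. apply dom_top; auto.
  apply le_trans with (c ; c^~). apply cyc2; auto. apply Hf.
  rewrite <- (wa_e e He). apply comp_mono; auto using le_top.
Qed.
Lemma isdom_top e a : isdom e a -> le a (e;top).
Proof. intros [He H]. apply le_trans with (e;a); auto. apply comp_mono_r, le_top. Qed.
Lemma dom_unique e f a : is_atom A a -> isdom e a -> isdom f a -> e = f.
Proof.
  intros Ha H1 H2. symmetry. apply (dom_of_le_top a e f); auto. apply H1. apply isdom_top; auto.
Qed.
Lemma ran_unique e f a : is_atom A a -> isran e a -> isran f a -> e = f.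
Proof.
  intros Ha H1 H2. apply (dom_unique e f (a^~)); auto using atom_conv, isran_conv.
Qed.
Lemma dom_comp a b c e : is_atom A c -> le c (a;b) -> isdom e a -> isdom e c.
Proof.
  intros Hc H Hd. destruct (dom_exists c Hc) as [f Hf].
  assert (f = e). { apply (dom_of_le_top c e f); auto. apply Hd.
    apply le_trans with (a;b); auto. rewrite <- (wa_e e); [|apply Hd].
    apply comp_mono; auto using le_top. apply isdom_top; auto. }
  subst; auto.
Qed.
Lemma dom_comp_inv a b c e : is_atom A a -> is_atom A c -> le c (a;b) -> isdom e c -> isdom e a.
Proof.
  intros Ha Hc H Hd. destruct (dom_exists a Ha) as [f Hf].
  assert (f = e). { apply (dom_unique f e c); auto. apply (dom_comp a b c f); auto. }
  subst; auto.
Qed.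
Lemma le_conv_comp c a b : le c (a;b) -> le (c^~) (b^~ ; a^~).
Proof. intro H. rewrite <- Hccomp. apply conv_mono; auto. Qed.
Lemma ran_comp a b c e : is_atom A c -> le c (a;b) -> isran e b -> isran e c.
Proof.
  intros Hc H Hr. apply isran_conv'. apply (dom_comp (b^~) (a^~) (c^~) e); auto using atom_conv, le_conv_comp, isran_conv.
Qed.
Lemma ran_comp_inv a b c e : is_atom A b -> is_atom A c -> le c (a;b) -> isran e c -> isran e b.
Proof.
  intros Hb Hc H Hr. apply isran_conv'. apply (dom_comp_inv (b^~) (a^~) (c^~) e); auto using atom_conv, le_conv_comp, isran_conv.
Qed.
Lemma mid a b c e : is_atom A b -> is_atom A c -> le c (a;b) -> isran e a -> isdom e b.
Proof.
  intros Hb Hc H Hr. apply (dom_comp (a^~) c b e); auto. apply cyc1; auto. apply isran_conv; auto.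
Qed.
Lemma mid_inv a b c e : is_atom A a -> is_atom A b -> is_atom A c -> le c (a;b) -> isdom e b -> isran e a.
Proof.
  intros Ha Hb Hc H Hd. destruct (ran_exists a Ha) as [f Hf].
  assert (f = e). { apply (dom_unique f e b); auto. apply (mid a b c f); auto. }
  subst; auto.
Qed.
Lemma idat_self e : idat e -> le e (e;e).
Proof.
  intro He. destruct (dom_exists e (proj1 He)) as [f [Hf Hfe]].
  assert (E : e = f). { apply atom_le_eq; try apply Hf; try apply He.
    apply le_trans with (f;e); auto. apply sub_r, He. }
  rewrite E at 2. exact Hfe.
Qed.
Lemma idl_eq e b c : le e 1' -> is_atom A b -> is_atom A c -> le c (e;b) -> c = b.
Proof. intros He Hb Hc H. apply atom_le_eq; auto. apply le_trans with (e;b); auto. apply sub_l; auto. Qed.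
Lemma idr_eq e a c : le e 1' -> is_atom A a -> is_atom A c -> le c (a;e) -> c = a.
Proof. intros He Ha Hc H. apply atom_le_eq; auto. apply le_trans with (a;e); auto. apply sub_r; auto. Qed.
Lemma isran_cyc e a : is_atom A a -> isran e a -> le e (a^~ ; a).
Proof. intros Ha [He H]. apply cyc1; auto. apply He. Qed.
Lemma isdom_cyc e a : is_atom A a -> isdom e a -> le e (a ; a^~).
Proof. intros Ha [He H]. apply cyc2; auto. apply He. Qed.

Definition mkf (a b c : A) : idx3 -> A := fun i => match i with i0 => a | i1 => b | i2 => c end.
Lemma mkB_in a b c : is_atom A a -> is_atom A b -> is_atom A c -> le b (c;a) -> inB A (mkf a b c).
Proof. intros. split; auto. intros []; auto. Qed.

Lemma c4core (k l : idx3) (y z x : Bpt A) : k <> l ->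
  le (proj1_sig y k) 1' -> proj1_sig y l = proj1_sig z l -> proj1_sig z k = proj1_sig x k ->
  exists w : Bpt A, proj1_sig y k = proj1_sig w k /\ proj1_sig w l = proj1_sig x l.
Proof.
  destruct y as [y [Hya Hy]], z as [z [Hza Hz]], x as [x [Hxa Hx]]; simpl.
  intros Hkl He Eyz Ezx.
  destruct k, l; try nd.
  - (* k=0 l=1 *)
    assert (E1 : y i1 = y i2) by (apply (idr_eq (y i0)); auto).
    assert (R1 : isran (y i0) (y i1)) by (split; [split; auto| rewrite E1 at 2; exact Hy]).
    rewrite Eyz in R1. apply (ran_comp_inv _ _ _ _ (Hza _) (Hza _) Hz) in R1.
    rewrite Ezx in R1. apply (ran_comp _ _ _ _ (Hxa _) Hx) in R1.
    exists (exist _ (mkf (y i0) (x i1) (x i1)) (mkB_in _ _ _ (Hya _) (Hxa _) (Hxa _) (proj2 R1))).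
    simpl. auto.
  - (* k=0 l=2 *)
    assert (E1 : y i1 = y i2) by (apply (idr_eq (y i0)); auto).
    assert (R1 : isran (y i0) (y i2)) by (split; [split; auto| rewrite <- E1 at 1; exact Hy]).
    rewrite Eyz in R1. apply (mid _ _ _ _ (Hza _) (Hza _) Hz) in R1.
    rewrite Ezx in R1. apply (mid_inv _ _ _ _ (Hxa _) (Hxa _) (Hxa _) Hx) in R1.
    exists (exist _ (mkf (y i0) (x i2) (x i2)) (mkB_in _ _ _ (Hya _) (Hxa _) (Hxa _) (proj2 R1))).
    simpl. auto.
  - (* k=1 l=0 *)
    assert (C1 : le (y i0) ((y i2)^~ ; y i1)) by (apply cyc1; auto).
    assert (E1 : y i0 = (y i2)^~) by (apply (idr_eq (y i1)); auto using atom_conv).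
    assert (R1 : isran (y i1) (y i0)) by (split; [split; auto| rewrite E1 at 2; exact C1]).
    rewrite Eyz in R1. apply (ran_comp _ _ _ _ (Hza _) Hz) in R1.
    rewrite Ezx in R1. apply (ran_comp_inv _ _ _ _ (Hxa _) (Hxa _) Hx) in R1.
    exists (exist _ (mkf (x i0) (y i1) ((x i0)^~)) (mkB_in _ _ _ (Hxa _) (Hya _) (atom_conv _ (Hxa _)) (isran_cyc _ _ (Hxa _) R1))).
    simpl. auto.
  - (* k=1 l=2 *)
    assert (C1 : le (y i2) (y i1 ; (y i0)^~)) by (apply cyc2; auto).
    assert (E1 : y i2 = (y i0)^~) by (apply (idl_eq (y i1)); auto using atom_conv).
    assert (R1 : isdom (y i1) (y i2)) by (split; [split; auto| rewrite E1 at 2; exact C1]).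
    rewrite Eyz in R1. apply (dom_comp _ _ _ _ (Hza _) Hz) in R1.
    rewrite Ezx in R1. apply (dom_comp_inv _ _ _ _ (Hxa _) (Hxa _) Hx) in R1.
    exists (exist _ (mkf ((x i2)^~) (y i1) (x i2)) (mkB_in _ _ _ (atom_conv _ (Hxa _)) (Hya _) (Hxa _) (isdom_cyc _ _ (Hxa _) R1))).
    simpl. auto.
  - (* k=2 l=0 *)
    assert (E1 : y i1 = y i0) by (apply (idl_eq (y i2)); auto).
    assert (R1 : isdom (y i2) (y i0)) by (split; [split; auto| rewrite <- E1 at 1; exact Hy]).
    rewrite Eyz in R1. apply (mid_inv _ _ _ _ (Hza _) (Hza _) (Hza _) Hz) in R1.
    rewrite Ezx in R1. apply (mid _ _ _ _ (Hxa _) (Hxa _) Hx) in R1.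
    exists (exist _ (mkf (x i0) (x i0) (y i2)) (mkB_in _ _ _ (Hxa _) (Hxa _) (Hya _) (proj2 R1))).
    simpl. auto.
  - (* k=2 l=1 *)
    assert (E1 : y i1 = y i0) by (apply (idl_eq (y i2)); auto).
    assert (R1 : isdom (y i2) (y i1)) by (split; [split; auto| rewrite E1 at 2; exact Hy]).
    rewrite Eyz in R1. apply (dom_comp_inv _ _ _ _ (Hza _) (Hza _) Hz) in R1.
    rewrite Ezx in R1. apply (dom_comp _ _ _ _ (Hxa _) Hx) in R1.
    exists (exist _ (mkf (x i1) (x i1) (y i2)) (mkB_in _ _ _ (Hxa _) (Hxa _) (Hya _) (proj2 R1))).
    simpl. auto.
Qed.

Lemma set_ext (X Y : CmSet A) : (forall s, X s <-> Y s) -> X = Y.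
Proof.
  intro H. apply functional_extensionality. intro s. apply propositional_extensionality. auto.
Qed.

Lemma c4_diag (s : Bpt A) k l m : k <> l -> m <> k -> m <> l -> Ekl l m s -> le (proj1_sig s k) 1'.
Proof. intros Hkl Hmk Hml H. destruct k, l, m; try nd; unfold Ekl in H; simpl in H; exact H. Qed.

Lemma c6a (s : Bpt A) l j : l <> j ->
  (True <-> exists t : Bpt A, (le (proj1_sig t j) 1' /\ le (proj1_sig t j) 1') /\ proj1_sig s l = proj1_sig t l).
Proof.
  intro Hlj. split; [intros _|auto].
  destruct s as [s [Hsa Hs]]; simpl.
  destruct l, j; try nd.
  - destruct (ran_exists _ (Hsa i0)) as [e He].
    exists (exist _ (mkf (s i0) e ((s i0)^~)) (mkB_in _ _ _ (Hsa _) (proj1 (proj1 He)) (atom_conv _ (Hsa _)) (isran_cyc _ _ (Hsa _) He))).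
    simpl. split; auto. split; apply He.
  - destruct (dom_exists _ (Hsa i0)) as [e He].
    exists (exist _ (mkf (s i0) (s i0) e) (mkB_in _ _ _ (Hsa _) (Hsa _) (proj1 (proj1 He)) (proj2 He))).
    simpl. split; auto. split; apply He.
  - destruct (ran_exists _ (Hsa i1)) as [e He].
    exists (exist _ (mkf e (s i1) (s i1)) (mkB_in _ _ _ (proj1 (proj1 He)) (Hsa _) (Hsa _) (proj2 He))).
    simpl. split; auto. split; apply He.
  - destruct (dom_exists _ (Hsa i1)) as [e He].
    exists (exist _ (mkf (s i1) (s i1) e) (mkB_in _ _ _ (Hsa _) (Hsa _) (proj1 (proj1 He)) (proj2 He))).
    simpl. split; auto. split; apply He.
  - destruct (ran_exists _ (Hsa i2)) as [e He].
    exists (exist _ (mkf e (s i2) (s i2)) (mkB_in _ _ _ (proj1 (proj1 He)) (Hsa _) (Hsa _) (proj2 He))).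
    simpl. split; auto. split; apply He.
  - destruct (dom_exists _ (Hsa i2)) as [e He].
    exists (exist _ (mkf ((s i2)^~) e (s i2)) (mkB_in _ _ _ (atom_conv _ (Hsa _)) (proj1 (proj1 He)) (Hsa _) (isdom_cyc _ _ (Hsa _) He))).
    simpl. split; auto. split; apply He.
Qed.

Lemma c6b2 (t : Bpt A) l : (forall i, i <> l -> le (proj1_sig t i) 1') -> le (proj1_sig t l) 1'.
Proof.
  destruct t as [t [Hta Ht]]; simpl. intro H.
  assert (H0 : i0 <> i1) by discriminate. assert (H1 : i0 <> i2) by discriminate.
  assert (H2 : i1 <> i2) by discriminate.
  destruct l.
  - apply le_trans with ((t i2)^~ ; t i1). apply cyc1; auto.
    apply le_trans with (t i1). apply sub_l. rewrite <- conv_id. apply conv_mono. apply H; discriminate.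
    apply H; discriminate.
  - apply le_trans with (t i2 ; t i0); auto. apply le_trans with (t i0). apply sub_l. apply H; discriminate.
    apply H; discriminate.
  - apply le_trans with (t i1 ; (t i0)^~). apply cyc2; auto.
    apply le_trans with (t i1). apply sub_r. rewrite <- conv_id. apply conv_mono. apply H; discriminate.
    apply H; discriminate.
Qed.

Lemma c6b (s : Bpt A) k l m : l <> k -> l <> m -> k <> m ->
  (le (proj1_sig s l) 1' <-> exists t : Bpt A, (le (proj1_sig t m) 1' /\ le (proj1_sig t k) 1') /\ proj1_sig s l = proj1_sig t l).
Proof.
  intros Hlk Hlm Hkm. split.
  - intro H. destruct s as [s [Hsa Hs]]; simpl in *.
    assert (He : idat (s l)) by (split; auto).
    pose proof (idat_self _ He) as HH.
    exists (exist _ (mkf (s l) (s l) (s l)) (mkB_in _ _ _ (Hsa _) (Hsa _) (Hsa _) HH)).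
    simpl. destruct k, l, m; simpl; auto.
  - intros [t [[H1 H2] E]]. rewrite E. apply c6b2. intros i Hi.
    destruct i, k, l, m; try nd; auto.
Qed.

Lemma Lm2 (u : idx3 -> A) : inB A u -> le (u i2) 1' -> u i1 = u i0 /\ isdom (u i2) (u i0).
Proof.
  intros [Ha H] He. assert (E : u i1 = u i0) by (apply (idl_eq (u i2)); auto).
  split; auto. split. split; auto. rewrite <- E at 1. auto.
Qed.
Lemma Lm0 (u : idx3 -> A) : inB A u -> le (u i0) 1' -> u i1 = u i2 /\ isran (u i0) (u i2).
Proof.
  intros [Ha H] He. assert (E : u i1 = u i2) by (apply (idr_eq (u i0)); auto).
  split; auto. split. split; auto. rewrite <- E at 1. auto.
Qed.
Lemma Lm1 (u : idx3 -> A) : inB A u -> le (u i1) 1' -> u i2 = (u i0)^~ /\ isran (u i1) (u i0).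
Proof.
  intros [Ha H] He. assert (C : le (u i0) ((u i2)^~ ; u i1)) by (apply cyc1; auto).
  assert (E : u i0 = (u i2)^~) by (apply (idr_eq (u i1)); auto using atom_conv).
  split. rewrite E, Hcc. reflexivity. split. split; auto. rewrite E at 2. auto.
Qed.

Lemma bpt_eq (u v : Bpt A) : (forall i, proj1_sig u i = proj1_sig v i) -> u = v.
Proof.
  destruct u as [u pu], v as [v pv]; simpl. intro H.
  assert (u = v) by (apply functional_extensionality; auto). subst.
  f_equal. apply proof_irrelevance.
Qed.

Lemma c7core k l (u v : Bpt A) : k <> l -> Ekl k l u -> Ekl k l v -> proj1_sig u k = proj1_sig v k -> u = v.
Proof.
  intros Hkl Hu Hv E. apply bpt_eq.
  destruct u as [u pu], v as [v pv]; simpl in *.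
  pose proof pu as [ua _]. pose proof pv as [va _].
  destruct k, l; try nd; unfold Ekl in *; simpl in *.
  - destruct (Lm2 u pu Hu) as [E1 D1]. destruct (Lm2 v pv Hv) as [E2 D2].
    rewrite E in D1. pose proof (dom_unique _ _ _ (va i0) D1 D2).
    intros []; congruence.
  - destruct (Lm1 u pu Hu) as [E1 D1]. destruct (Lm1 v pv Hv) as [E2 D2].
    rewrite E in D1. pose proof (ran_unique _ _ _ (va i0) D1 D2).
    intros []; congruence.
  - destruct (Lm2 u pu Hu) as [E1 D1]. destruct (Lm2 v pv Hv) as [E2 D2].
    assert (E0 : u i0 = v i0) by congruence.
    rewrite E0 in D1. pose proof (dom_unique _ _ _ (va i0) D1 D2).
    intros []; congruence.
  - destruct (Lm0 u pu Hu) as [E1 D1]. destruct (Lm0 v pv Hv) as [E2 D2].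
    assert (E0 : u i2 = v i2) by congruence.
    rewrite E0 in D1. pose proof (ran_unique _ _ _ (va i2) D1 D2).
    intros []; congruence.
  - destruct (Lm1 u pu Hu) as [E1 D1]. destruct (Lm1 v pv Hv) as [E2 D2].
    assert (E0 : u i0 = v i0). { rewrite <- (Hcc (u i0)), <- (Hcc (v i0)). congruence. }
    rewrite E0 in D1. pose proof (ran_unique _ _ _ (va i0) D1 D2).
    intros []; congruence.
  - destruct (Lm0 u pu Hu) as [E1 D1]. destruct (Lm0 v pv Hv) as [E2 D2].
    rewrite E in D1. pose proof (ran_unique _ _ _ (va i2) D1 D2).
    intros []; congruence.
Qed.

Lemma main : is_NA3 (@cm_join A) (@cm_meet A) (@cm_compl A) (@cm_zero A) (@cm_one A)
         (@cm_cyl A) (@cm_diag A).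
Proof.
  unfold is_NA3. split; [|split; [|split; [|split; [|split; [|split; [|split]]]]]].
  - unfold is_boolean_algebra.
    repeat split; intros; apply set_ext; intro s;
      unfold cm_join, cm_meet, cm_compl, cm_one, cm_zero;
      first [tauto | split; [auto | intros _; apply classic]].
  - intro k. apply set_ext; intro s. unfold cm_cyl, cm_zero. firstorder.
  - intros k X. apply set_ext; intro s. unfold cm_join, cm_cyl. split; [|auto].
    intros [H|H]; auto. exists s. split; auto. reflexivity.
  - intros k X Y. apply set_ext; intro y. unfold cm_cyl, cm_meet, Tk. split.
    + intros [x [[Hx [z [Hz Exz]]] Eyx]]. split. exists x; auto.
      exists z. split; auto. congruence.
    + intros [[x [Hx Ex]] [z [Hz Ez]]]. exists x. split; auto. split; auto.
      exists z. split; auto. congruence.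
  - intros k l m X Hmk Hml. apply set_ext; intro s. unfold cm_join. split; [|auto].
    intros [H|H]; auto.
    destruct H as [[z [[x [Hx Ezx]] Esz]] Hd]. unfold Tk in *.
    unfold cm_cyl, Tk.
    assert (Hd' : forall k l : idx3, k = l \/ k <> l) by (intros [] []; auto; right; discriminate).
    destruct (Hd' k l) as [Ekl'|Hkl].
    + subst l. exists x. split. exists x; auto. congruence.
    + destruct (c4core k l s z x Hkl (c4_diag s k l m Hkl Hmk Hml Hd) Esz Ezx) as [w [E1 E2]].
      exists w. split; auto. exists x. auto.
  - intros []; reflexivity.
  - intros k l m Hlk Hlm. apply set_ext; intro s. unfold cm_diag, cm_cyl, cm_meet, Tk.
    destruct k, l, m; try nd; unfold Ekl; simpl;
      first [ apply c6a; discriminate | apply c6b; discriminate ].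
  - intros k l X Hkl. apply set_ext; intro s. unfold cm_meet, cm_cyl, cm_diag, cm_zero, cm_compl, Tk.
    split; [|intros []].
    intros [[u [[Hdu Hu] Esu]] [v [[Hdv Hv] Esv]]].
    assert (u = v) by (apply (c7core k l); auto; congruence). subst. auto.
Qed.
End WA.

Theorem lemma5 (A : RAsig) :
  is_WA A -> is_atomic A ->
  is_NA3 (@cm_join A) (@cm_meet A) (@cm_compl A) (@cm_zero A) (@cm_one A)
         (@cm_cyl A) (@cm_diag A).
Proof.
  intros [H1 [H2 [H3 [H4 [H5 [H6 [H7 [H8 [H9 H10]]]]]]]]] Hat.
  exact (main A H1 H2 H3 H4 H5 H6 H7 H8 H9 H10 Hat).
Qed.
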